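(* Let $\tilde\beta\in(0,1)$. Consider: (C3.1): there exist symmetric positive definite $Q^{(k)}\in\mathbb{R}^{\tilde n\times\tilde n}$, $k\in\{1,\dots,N\}$, and a symmetric positive semidefinite $Z\in\mathbb{R}^{n(n+m)\times n(n+m)}$ with $\mathrm{rank}(Z)=1$ and $S^{(k)}_{\rm lmi}(Q^{(k)},Z,\tilde\beta)\succeq0$ for all $k$; (C3.2): there exist symmetric positive definite $Q^{(k)}$ and symmetric positive semidefinite $Z$ with $\mathrm{rank}(Z)=1$ and $S^{(k)}_{\rm lmi}(Q^{(k)},Z,1)\succ0$ for all $k$; (C2.1): there exist symmetric positive definite $Q^{(k)}$, $H\in\mathbb{R}^{n\times n}$, $L\in\mathbb{R}^{m\times n}$ with $S^{(k)}_{\rm qmi}(Q^{(k)},H,L,\tilde\beta)\succeq0$ for all $k$; (C2.2): there exist symmetric positive definite $Q^{(k)}$, $H$, $L$ with $S^{(k)}_{\rm qmi}(Q^{(k)},H,L,1)\succ0$ for all $k$. Then (C3.1) is equivalent to (C2.1), and (C3.2) is equivalent to (C2.2), where $Z$ and $(H,L)$ correspond via $Z=\begin{bmatrix}\mathrm{vec}(H)\\ \mathrm{vec}(L)\end{bmatrix}\begin{bmatrix}\mathrm{vec}(H)\\ \mathrm{vec}(L)\end{bmatrix}^\top$.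
   Context: Let $n,m,N$ be positive integers, $\tilde n=n(n+1)/2$. $\mathrm{vec}$ stacks columns; $\mathrm{vech}(X)$ stacks columnwise the entries on and below the diagonal. $E_e\in\mathbb{R}^{\tilde n\times n^2}$ with $E_e\mathrm{vec}(X)=\mathrm{vech}(X)$ for all $X\in\mathbb{R}^{n\times n}$; $D\in\mathbb{R}^{n^2\times\tilde n}$ with $D\mathrm{vech}(Y)=\mathrm{vec}(Y)$ for symmetric $Y$; $\mathcal{C}(Y):=E_eYD$. Let $M^{(1)},\dots,M^{(N)}\in\mathbb{R}^{n(n+m)\times n(n+m)}$ be symmetric, with blocks $M^{(k)}_{i,j}\in\mathbb{R}^{n\times n}$ ($i,j\le n+m$). Column $n(j-1)+i$ of $F^{(k)}_{aa}\in\mathbb{R}^{n^2\times n^2}$ is $\mathrm{vec}(M^{(k)}_{i,j})$; column $m(j-1)+i'$ of $F^{(k)}_{ab}\in\mathbb{R}^{n^2\times nm}$ is $\mathrm{vec}(M^{(k)}_{n+i',j})$; column $n(j'-1)+i$ of $F^{(k)}_{ba}\in\mathbb{R}^{n^2\times nm}$ is $\mathrm{vec}(M^{(k)}_{i,n+j'})$; column $m(j'-1)+i'$ of $F^{(k)}_{bb}\in\mathbb{R}^{n^2\times m^2}$ is $\mathrm{vec}(M^{(k)}_{n+i',n+j'})$ ($i,j\le n$, $i',j'\le m$). QMI: $F^{(k)}_{\rm qmi}(L,H):=\mathcal{C}(F^{(k)}_{aa}(H\otimes H)-F^{(k)}_{ab}(H\otimes L)-F^{(k)}_{ba}(L\otimes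 H)+F^{(k)}_{bb}(L\otimes L))$, $S^{(k)}_{\rm qmi}(Q,H,L,\tilde\beta):=\begin{bmatrix}\tilde\beta^2Q & F^{(k)}_{\rm qmi}(L,H)^\top\\ F^{(k)}_{\rm qmi}(L,H) & \mathcal{C}(H\otimes H)+\mathcal{C}(H\otimes H)^\top-Q\end{bmatrix}$. LMI: for symmetric $Z\in\mathbb{R}^{n(n+m)\times n(n+m)}$, partition into $2n\times2n$ blocks $Z_{p,q}$, with block rows/columns $1..n$ of size $n$ and $n+1..2n$ of size $m$. Define $F_{hh}(Z)\in\mathbb{R}^{n^2\times n^2}$, $F_{hl}(Z),F_{lh}(Z)\in\mathbb{R}^{mn\times n^2}$, $F_{ll}(Z)\in\mathbb{R}^{m^2\times n^2}$ by: for $i,j\le n$, column $n(j-1)+i$ equals $\mathrm{vec}(Z_{i,j})$, $\mathrm{vec}(Z_{n+i,j})$, $\mathrm{vec}(Z_{i,n+j})$, $\mathrm{vec}(Z_{n+i,n+j})$ respectively. $F^{(k)}_{\rm lmi}(Z):=\mathcal{C}(F^{(k)}_{aa}F_{hh}(Z)-F^{(k)}_{ab}F_{hl}(Z)-F^{(k)}_{ba}F_{lh}(Z)+F^{(k)}_{bb}F_{ll}(Z))$ and $S^{(k)}_{\rm lmi}(Q,Z,\tilde\beta):=\begin{bmatrix}\tilde\beta^2Q & F^{(k)}_{\rm lmi}(Z)^\top\\ F^{(k)}_{\rm lmi}(Z) & \mathcal{C}(F_{hh}(Z))+\mathcal{C}(F_{hh}(Z))^\top-Q\end{bmatrix}$.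 *)

(* Defs.v *)
(* All matrices are over an abstract real field R, 0-based indices. *)
From HB Require Import structures.
From mathcomp Require Import all_boot all_order all_algebra.
Import Order.TTheory GRing.Theory Num.Theory.
Local Open Scope ring_scope.

Section Defs.
Context {R : rcfType}.

(* entry of a matrix addressed by natural numbers (0 outside the range) *)
Definition mxat {a b : nat} (A : 'M[R]_(a, b)) (i j : nat) : R :=
  match (insub i : option 'I_a), (insub j : option 'I_b) with
  | Some i', Some j' => A i' j'
  | _, _ => 0
  end.

Definition mxfun (a b : nat) (f : nat -> nat -> R) : 'M[R]_(a, b) :=
  \matrix_(i < a, j < b) f i j.

Definition vec {p q : nat} (X : 'M[R]_(p, q)) : 'cV[R]_(p * q) :=
  mxfun (p * q) 1 (fun k _ => mxat X (k %% p) (k %/ p)).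

Definition kron {p q r s : nat} (A : 'M[R]_(p, q)) (B : 'M[R]_(r, s))
  : 'M[R]_(p * r, q * s) :=
  mxfun (p * r) (q * s)
    (fun x y => mxat A (x %/ r) (y %/ s) * mxat B (x %% r) (y %% s)).

Definition tn (n : nat) : nat := (n * n.+1)./2.

(* position (0-based) in vech of the entry (i,j), j <= i < n, stacking the
   lower-triangular part column by column *)
Definition vech_index (n i j : nat) : nat := (j * n - 'C(j, 2) + (i - j))%N.

(* E_e : E_e vec(X) = vech(X) *)
Definition Ee (n : nat) : 'M[R]_(tn n, n * n) :=
  mxfun (tn n) (n * n) (fun idx k =>
    if (k %/ n <= k %% n)%N && (idx == vech_index n (k %% n) (k %/ n))
    then 1 else 0).

(* D : D vech(Y) = vec(Y) for symmetric Y *)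
Definition Dup (n : nat) : 'M[R]_(n * n, tn n) :=
  mxfun (n * n) (tn n) (fun k idx =>
    if idx == vech_index n (maxn (k %% n) (k %/ n)) (minn (k %% n) (k %/ n))
    then 1 else 0).

Definition Ccal (n : nat) (Y : 'M[R]_(n * n)) : 'M[R]_(tn n) := Ee n *m Y *m Dup n.

(* The matrices F_aa, F_ab, F_ba, F_bb built from M (blocks M_{i,j} of size n x n) *)
Definition Faa (n m : nat) (M : 'M[R]_(n * (n + m))) : 'M[R]_(n * n, n * n) :=
  mxfun _ _ (fun r c => mxat M (n * (c %% n) + r %% n) (n * (c %/ n) + r %/ n)).
Definition Fab (n m : nat) (M : 'M[R]_(n * (n + m))) : 'M[R]_(n * n, n * m) :=
  mxfun _ _ (fun r c => mxat M (n * (n + c %% m) + r %% n) (n * (c %/ m) + r %/ n)).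
Definition Fba (n m : nat) (M : 'M[R]_(n * (n + m))) : 'M[R]_(n * n, m * n) :=
  mxfun _ _ (fun r c => mxat M (n * (c %% n) + r %% n) (n * (n + c %/ n) + r %/ n)).
Definition Fbb (n m : nat) (M : 'M[R]_(n * (n + m))) : 'M[R]_(n * n, m * m) :=
  mxfun _ _ (fun r c => mxat M (n * (n + c %% m) + r %% n) (n * (n + c %/ m) + r %/ n)).

Definition Fqmi (n m : nat) (M : 'M[R]_(n * (n + m)))
  (L : 'M[R]_(m, n)) (H : 'M[R]_n) : 'M[R]_(tn n) :=
  Ccal n (Faa n m M *m kron H H - Fab n m M *m kron H L
          - Fba n m M *m kron L H + Fbb n m M *m kron L L).

Definition Sqmi (n m : nat) (M : 'M[R]_(n * (n + m)))
  (Q : 'M[R]_(tn n)) (H : 'M[R]_n) (L : 'M[R]_(m, n)) (bt : R)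
  : 'M[R]_(tn n + tn n) :=
  block_mx (bt ^+ 2 *: Q) (Fqmi n m M L H)^T
           (Fqmi n m M L H) (Ccal n (kron H H) + (Ccal n (kron H H))^T - Q).

(* LMI: Z partitioned into 2n x 2n blocks, block rows/cols 1..n of size n,
   n+1..2n of size m *)
Definition Fhh (n m : nat) (Z : 'M[R]_(n * (n + m))) : 'M[R]_(n * n, n * n) :=
  mxfun _ _ (fun r c => mxat Z (n * (c %% n) + r %% n) (n * (c %/ n) + r %/ n)).
Definition Fhl (n m : nat) (Z : 'M[R]_(n * (n + m))) : 'M[R]_(n * m, n * n) :=
  mxfun _ _ (fun r c =>
    mxat Z (n * n + m * (c %% n) + r %% m) (n * (c %/ n) + r %/ m)).
Definition Flh (n m : nat) (Z : 'M[R]_(n * (n + m))) : 'M[R]_(m * n, n * n) :=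
  mxfun _ _ (fun r c =>
    mxat Z (n * (c %% n) + r %% n) (n * n + m * (c %/ n) + r %/ n)).
Definition Fll (n m : nat) (Z : 'M[R]_(n * (n + m))) : 'M[R]_(m * m, n * n) :=
  mxfun _ _ (fun r c =>
    mxat Z (n * n + m * (c %% n) + r %% m) (n * n + m * (c %/ n) + r %/ m)).

Definition Flmi (n m : nat) (M Z : 'M[R]_(n * (n + m))) : 'M[R]_(tn n) :=
  Ccal n (Faa n m M *m Fhh n m Z - Fab n m M *m Fhl n m Z
          - Fba n m M *m Flh n m Z + Fbb n m M *m Fll n m Z).

Definition Slmi (n m : nat) (M : 'M[R]_(n * (n + m)))
  (Q : 'M[R]_(tn n)) (Z : 'M[R]_(n * (n + m))) (bt : R) : 'M[R]_(tn n + tn n) :=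
  block_mx (bt ^+ 2 *: Q) (Flmi n m M Z)^T
           (Flmi n m M Z) (Ccal n (Fhh n m Z) + (Ccal n (Fhh n m Z))^T - Q).

Definition stackHL (n m : nat) (H : 'M[R]_n) (L : 'M[R]_(m, n)) : 'cV[R]_(n * (n + m)) :=
  mxfun _ 1 (fun k _ => if (k < n * n)%N then mxat (vec H) k 0
                        else mxat (vec L) (k - n * n)%N 0).
Definition Zof (n m : nat) (H : 'M[R]_n) (L : 'M[R]_(m, n)) : 'M[R]_(n * (n + m)) :=
  stackHL n m H L *m (stackHL n m H L)^T.

Definition psdmx {d : nat} (A : 'M[R]_d) : Prop :=
  A^T = A /\ forall x : 'cV[R]_d, 0 <= (x^T *m A *m x) ord0 ord0.
Definition pdmx {d : nat} (A : 'M[R]_d) : Prop :=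
  A^T = A /\ forall x : 'cV[R]_d, x != 0 -> 0 < (x^T *m A *m x) ord0 ord0.

Definition C31 (n m N : nat) (M : 'I_N -> 'M[R]_(n * (n + m))) (bt : R) : Prop :=
  exists (Q : 'I_N -> 'M[R]_(tn n)) (Z : 'M[R]_(n * (n + m))),
    (forall k, pdmx (Q k)) /\ psdmx Z /\ \rank Z = 1%N /\
    (forall k, psdmx (Slmi n m (M k) (Q k) Z bt)).
Definition C32 (n m N : nat) (M : 'I_N -> 'M[R]_(n * (n + m))) : Prop :=
  exists (Q : 'I_N -> 'M[R]_(tn n)) (Z : 'M[R]_(n * (n + m))),
    (forall k, pdmx (Q k)) /\ psdmx Z /\ \rank Z = 1%N /\
    (forall k, pdmx (Slmi n m (M k) (Q k) Z 1)).
Definition C21 (n m N : nat) (M : 'I_N -> 'M[R]_(n * (n + m))) (bt : R) : Prop :=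
  exists (Q : 'I_N -> 'M[R]_(tn n)) (H : 'M[R]_n) (L : 'M[R]_(m, n)),
    (forall k, pdmx (Q k)) /\ (forall k, psdmx (Sqmi n m (M k) (Q k) H L bt)).
Definition C22 (n m N : nat) (M : 'I_N -> 'M[R]_(n * (n + m))) : Prop :=
  exists (Q : 'I_N -> 'M[R]_(tn n)) (H : 'M[R]_n) (L : 'M[R]_(m, n)),
    (forall k, pdmx (Q k)) /\ (forall k, pdmx (Sqmi n m (M k) (Q k) H L 1)).

End Defs.

(* Main.v *)
Require Import Defs.
From HB Require Import structures.
From mathcomp Require Import all_boot all_order all_algebra.
From mathcomp Require Import zify ring lra.
Import Order.TTheory GRing.Theory Num.Theory.
Local Open Scope ring_scope.

Set Implicit Arguments.
Unset Strict Implicit.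
Section Aux.
Variable R : rcfType.

Lemma mxatE a b (A : 'M[R]_(a, b)) i j (hi : (i < a)%N) (hj : (j < b)%N) :
  mxat A i j = A (Ordinal hi) (Ordinal hj).
Proof.
rewrite /mxat; case: insubP => [i' _ ei|]; last by rewrite hi.
case: insubP => [j' _ ej|]; last by rewrite hj.
by congr (A _ _); apply: val_inj.
Qed.


Lemma mxat_ord a b (A : 'M[R]_(a, b)) (i : 'I_a) (j : 'I_b) :
  mxat A i j = A i j.
Proof. by rewrite (mxatE A (ltn_ord i) (ltn_ord j)); congr (A _ _); apply: val_inj. Qed.

Lemma mxat_fun a b (f : nat -> nat -> R) i j : (i < a)%N -> (j < b)%N -> mxat (mxfun a b f) i j = f i j.
Proof. by move=> hi hj; rewrite (mxatE _ hi hj) mxE. Qed.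

Lemma mxat0 a b i j : mxat (0 : 'M[R]_(a, b)) i j = 0.
Proof. by rewrite /mxat; case: (insub i) => [x|] //; case: (insub j) => [y|] //; rewrite mxE. Qed.

Lemma modDl n x y : (y < n)%N -> ((n * x + y) %% n = y)%N.
Proof. by move=> h; rewrite mulnC modnMDl modn_small. Qed.

Lemma divDl n x y : (y < n)%N -> ((n * x + y) %/ n = x)%N.
Proof. move=> h; rewrite mulnC divnMDl ?divn_small ?addn0 //; lia. Qed.

Lemma ltDl n m x y : (x < n)%N -> (y < m)%N -> (m * x + y < m * n)%N.
Proof. by move=> hx hy; nia. Qed.

Definition sv n m (H : 'M[R]_n) (L : 'M[R]_(m, n)) (a : nat) : R :=
  if (a < n * n)%N then mxat H (a %% n) (a %/ n)
  else mxat L ((a - n * n) %% m) ((a - n * n) %/ m).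

Lemma stackE n m H L a : (0 < n)%N -> (0 < m)%N -> (a < n * (n + m))%N ->
  mxat (stackHL n m H L) a 0 = sv H L a.
Proof.
move=> hn hm ha; rewrite /stackHL mxat_fun // /sv.
case: ifP => h.
  rewrite /vec mxat_fun //.
rewrite /vec mxat_fun //; lia.
Qed.

Lemma ZofE n m H L a b : (0 < n)%N -> (0 < m)%N -> (a < n * (n + m))%N ->
  (b < n * (n + m))%N -> mxat (Zof n m H L) a b = sv H L a * sv H L b.
Proof.
move=> hn hm ha hb; rewrite (mxatE _ ha hb) /Zof.
have e := stackE H L hn hm.
move: (stackHL n m H L) e => s e.
rewrite mxE big_ord1 mxE.
by rewrite -!(mxat_ord s) /= !e.
Qed.


Lemma svH n m (H : 'M[R]_n) (L : 'M[R]_(m, n)) x y : (x < n)%N -> (y < n)%N ->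
  sv H L (n * x + y) = mxat H y x.
Proof.
move=> hx hy; rewrite /sv ifT ?modDl ?divDl //; exact: ltDl.
Qed.

Lemma svL n m (H : 'M[R]_n) (L : 'M[R]_(m, n)) x y : (x < n)%N -> (y < m)%N ->
  sv H L (n * n + m * x + y) = mxat L y x.
Proof.
move=> hx hy; rewrite /sv ifF; last by lia.
by rewrite -addnA addKn modDl ?divDl.
Qed.

Section Key.
Variables (n m : nat) (H : 'M[R]_n) (L : 'M[R]_(m, n)).
Hypotheses (hn : (0 < n)%N) (hm : (0 < m)%N).

Lemma FhhZ : Fhh n m (Zof n m H L) = kron H H.
Proof.
apply/matrixP => r c; rewrite /Fhh /kron !mxE.
have hr := ltn_ord r; have hc := ltn_ord c.
have r1 : (r %% n < n)%N by rewrite ltn_mod.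
have c1 : (c %% n < n)%N by rewrite ltn_mod.
have r2 : (r %/ n < n)%N by rewrite ltn_divLR // mulnC.
have c2 : (c %/ n < n)%N by rewrite ltn_divLR // mulnC.
rewrite ZofE //; try nia.
by rewrite !svH // mulrC.
Qed.

Lemma FhlZ : Fhl n m (Zof n m H L) = kron H L.
Proof.
apply/matrixP => r c; rewrite /Fhl /kron !mxE.
have hr := ltn_ord r; have hc := ltn_ord c.
have r1 : (r %% m < m)%N by rewrite ltn_mod.
have c1 : (c %% n < n)%N by rewrite ltn_mod.
have r2 : (r %/ m < n)%N by rewrite ltn_divLR // mulnC.
have c2 : (c %/ n < n)%N by rewrite ltn_divLR // mulnC.
rewrite ZofE //; try nia.
by rewrite svL // svH // mulrC.
Qed.

Lemma FlhZ : Flh n m (Zof n m H L) = kron L H.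
Proof.
apply/matrixP => r c; rewrite /Flh /kron !mxE.
have hr := ltn_ord r; have hc := ltn_ord c.
have r1 : (r %% n < n)%N by rewrite ltn_mod.
have c1 : (c %% n < n)%N by rewrite ltn_mod.
have r2 : (r %/ n < m)%N by rewrite ltn_divLR // mulnC.
have c2 : (c %/ n < n)%N by rewrite ltn_divLR // mulnC.
rewrite ZofE //; try nia.
by rewrite svL // svH // mulrC.
Qed.

Lemma FllZ : Fll n m (Zof n m H L) = kron L L.
Proof.
apply/matrixP => r c; rewrite /Fll /kron !mxE.
have hr := ltn_ord r; have hc := ltn_ord c.
have r1 : (r %% m < m)%N by rewrite ltn_mod.
have c1 : (c %% n < n)%N by rewrite ltn_mod.
have r2 : (r %/ m < m)%N by rewrite ltn_divLR // mulnC.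
have c2 : (c %/ n < n)%N by rewrite ltn_divLR // mulnC.
rewrite ZofE //; try nia.
by rewrite !svL // mulrC.
Qed.

Lemma SlmiZ M Q bt : Slmi n m M Q (Zof n m H L) bt = Sqmi n m M Q H L bt.
Proof. by rewrite /Slmi /Sqmi /Flmi /Fqmi FhhZ FhlZ FlhZ FllZ. Qed.

End Key.
End Aux.

Set Implicit Arguments.
Unset Strict Implicit.

Section Aux2.
Variable R : rcfType.

Lemma pd_psd d (A : 'M[R]_d) : pdmx A -> psdmx A.
Proof.
case=> hs hp; split => // x; case: (eqVneq x 0) => [->|/hp/ltW //].
by rewrite mulmx0 mxE.
Qed.

Lemma quad1 d (s x : 'cV[R]_d) :
  (x^T *m (s *m s^T) *m x) ord0 ord0 = ((x^T *m s) ord0 ord0) ^+ 2.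
Proof.
rewrite !mulmxA -(mulmxA (x^T *m s)).
have e : s^T *m x = (x^T *m s)^T by rewrite trmx_mul trmxK.
rewrite e; move: (x^T *m s) => a.
rewrite mxE big_ord1. rewrite [a^T _ _]mxE. by rewrite expr2.
Qed.

Lemma psd_ssT d (s : 'cV[R]_d) : psdmx (s *m s^T).
Proof. by split; [rewrite trmx_mul trmxK | move=> x; rewrite quad1 sqr_ge0]. Qed.

Lemma rank_ssT d (s : 'cV[R]_d) : s != 0 -> \rank (s *m s^T) = 1%N.
Proof.
move=> hs; apply/eqP; rewrite eqn_leq; apply/andP; split.
  exact: leq_trans (mxrankM_maxl _ _) (rank_leq_col _).
rewrite lt0n mxrank_eq0; apply: contra hs => /eqP h0.
apply/eqP/matrixP => i j; rewrite (ord1 j) !mxE.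
move/matrixP: h0 => /(_ i i); rewrite !mxE big_ord1 !mxE => /eqP.
by rewrite mulf_eq0 orbb => /eqP.
Qed.

Lemma quad_block p q (A : 'M[R]_p) B C (D : 'M[R]_q) (y : 'cV[R]_q) :
  (col_mx 0 y)^T *m block_mx A B C D *m col_mx 0 y = y^T *m D *m y.
Proof.
by rewrite tr_col_mx mul_row_block mul_row_col !trmx0 !mul0mx !add0r mulmx0 add0r.
Qed.

Lemma tn_gt0 n : (0 < n)%N -> (0 < tn n)%N.
Proof. move=> hn; rewrite /tn -divn2; rewrite divn_gt0 //; nia. Qed.

Lemma not_psd0 n m M (Q : 'M[R]_(tn n)) bt : (0 < n)%N -> pdmx Q ->
  ~ psdmx (Slmi n m M Q 0 bt).
Proof.
move=> hn [_ hQ] [_ hP].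
have h0 : Fhh n m (0 : 'M[R]_(n * (n + m))) = 0.
  by apply/matrixP => i j; rewrite !mxE mxat0.
pose y : 'cV[R]_(tn n) := delta_mx (Ordinal (tn_gt0 hn)) ord0.
have hy : y != 0.
  apply/negP => /eqP/matrixP/(_ (Ordinal (tn_gt0 hn)) ord0).
  by rewrite !mxE !eqxx /= => /eqP; rewrite oner_eq0.
have := hP (col_mx 0 y); rewrite /Slmi quad_block h0 /Ccal mulmx0 mul0mx trmx0 add0r sub0r.
rewrite mulmxN mulNmx mxE; have := hQ _ hy; lra.
Qed.

End Aux2.

Set Implicit Arguments.
Unset Strict Implicit.

Section Aux3.
Variable R : rcfType.

Lemma stack_surj n m (s : 'cV[R]_(n * (n + m))) : (0 < n)%N -> (0 < m)%N ->
  exists H L, stackHL n m H L = s.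
Proof.
move=> hn hm.
exists (mxfun n n (fun i j => mxat s (n * j + i) 0)).
exists (mxfun m n (fun i j => mxat s (n * n + m * j + i) 0)).
apply/matrixP => k z; rewrite (ord1 z).
rewrite -[LHS](mxat_ord (stackHL _ _ _ _) k ord0) -[RHS](mxat_ord s k ord0).
have hk := ltn_ord k.
rewrite stackE // /sv; case: ifP => h.
  rewrite mxat_fun ?ltn_mod ?ltn_divLR // 1?mulnC //.
  by rewrite (mulnC n (k %/ n)%N) -(divn_eq (nat_of_ord k) n).
have h1 : (k - n * n < m * n)%N by lia.
rewrite mxat_fun ?ltn_mod ?ltn_divLR //; try lia.
rewrite -addnA (mulnC m ((k - n * n) %/ m)%N) -(divn_eq (k - n * n)%N m) subnKC //; lia.
Qed.

Lemma rank1_fact d (Z : 'M[R]_d) : psdmx Z -> \rank Z = 1%N ->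
  exists s : 'cV[R]_d, Z = s *m s^T.
Proof.
move=> [hsym hpsd] hr.
have hd : (0 < d)%N by rewrite -hr rank_leq_col.
pose i0 : 'I_d := Ordinal hd.
have hpid : pid_mx 1 = delta_mx i0 (ord0 : 'I_1) *m delta_mx ord0 i0 :> 'M[R]_d.
  rewrite mul_delta_mx; apply/matrixP => i j; rewrite !mxE.
  congr (_%:R); case: i j => [i hi] [j hj] /=.
  rewrite -!val_eqE /=.
  by case: i {hi} => [|i]; case: j {hj} => [|j] //=; rewrite ?andbF.
have e := mulmx_ebase Z; rewrite hr hpid in e.
have hZ : Z = (col_ebase Z *m delta_mx i0 (ord0 : 'I_1)) *m (delta_mx (ord0 : 'I_1) i0 *m row_ebase Z).
  by rewrite -{1}e !mulmxA.
move: (col_ebase Z *m delta_mx i0 (ord0 : 'I_1)) (delta_mx (ord0 : 'I_1) i0 *m row_ebase Z) hZ => u w hZ.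
have hZe j k : Z j k = u j ord0 * w ord0 k by rewrite hZ mxE big_ord1.
have [i hi] : exists i, u i ord0 != 0.
  case: (pickP (fun i => u i ord0 != 0)) => [i hi|h0]; first by exists i.
  have : Z = 0.
    by apply/matrixP => j k; rewrite hZe mxE; move/negbFE/eqP: (h0 j) ->; rewrite mul0r.
  by move=> hz; move: hr; rewrite hz mxrank0.
have hs j k : Z j k = Z k j by rewrite -{1}hsym mxE.
pose c := w ord0 i / u i ord0.
have hw k : w ord0 k = c * u k ord0.
  have := hs i k; rewrite !hZe /c => h.
  apply: (mulfI hi); rewrite h; field; exact: hi.
have hc : 0 <= c.
  have := hpsd (delta_mx i ord0).
  rewrite trmx_delta -rowE -colE !mxE hZe hw.
  have hu : 0 < u i ord0 ^+ 2 by rewrite exprn_even_gt0.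
  by rewrite mulrCA -expr2 pmulr_lge0.
exists (Num.sqrt c *: u); apply/matrixP => j k.
rewrite hZe hw !mxE big_ord1 !mxE.
have hc2 : Num.sqrt c * Num.sqrt c = c by rewrite -expr2 sqr_sqrtr.
rewrite -[in LHS]hc2; ring.
Qed.

End Aux3.

Set Implicit Arguments.
Unset Strict Implicit.

Section Main.
Variables (R : rcfType) (n m N : nat) (M : 'I_N -> 'M[R]_(n * (n + m))) (bt : R).
Hypotheses (hn : (0 < n)%N) (hm : (0 < m)%N) (hN : (0 < N)%N).
Variable P : 'M[R]_(tn n + tn n) -> Prop.
Hypothesis hP : forall X, P X -> psdmx X.

Lemma fwdL (Q : 'I_N -> 'M[R]_(tn n)) (Z : 'M[R]_(n * (n + m))) :
  psdmx Z -> \rank Z = 1%N ->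
  (forall k, P (Slmi n m (M k) (Q k) Z bt)) ->
  exists (H : 'M[R]_n) (L : 'M[R]_(m, n)), Z = Zof n m H L /\
    (forall k, P (Sqmi n m (M k) (Q k) H L bt)).
Proof.
move=> hZ hr hS.
have [s hs] := rank1_fact hZ hr.
have [H [L hHL]] := stack_surj s hn hm.
have eZ : Z = Zof n m H L by rewrite /Zof hHL.
exists H, L; split => // k; rewrite -SlmiZ //; rewrite -eZ; exact: hS.
Qed.

Lemma bwdL (Q : 'I_N -> 'M[R]_(tn n)) (H : 'M[R]_n) (L : 'M[R]_(m, n)) :
  (forall k, pdmx (Q k)) ->
  (forall k, P (Sqmi n m (M k) (Q k) H L bt)) ->
  psdmx (Zof n m H L) /\ \rank (Zof n m H L) = 1%N /\
  (forall k, P (Slmi n m (M k) (Q k) (Zof n m H L) bt)).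
Proof.
move=> hQ hS; split; first exact: psd_ssT.
split; last by move=> k; rewrite SlmiZ.
apply: rank_ssT; apply/negP => /eqP s0.
pose k0 : 'I_N := Ordinal hN.
have hz : Zof n m H L = 0 by rewrite /Zof s0 mul0mx.
apply: (not_psd0 (M:=M k0) (bt:=bt) hn (hQ k0)).
rewrite -hz SlmiZ //; exact: hP.
Qed.

End Main.

Unset Implicit Arguments.
Set Strict Implicit.

Theorem theorem8 (R : rcfType) (n m N : nat)
  (M : 'I_N -> 'M[R]_(n * (n + m))) (bt : R) :
  (0 < n)%N -> (0 < m)%N -> (0 < N)%N ->
  (forall k, (M k)^T = M k) ->
  0 < bt < 1 ->
  (* the stated equivalences *)
  (C31 n m N M bt <-> C21 n m N M bt) /\
  (C32 n m N M <-> C22 n m N M) /\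
  (* the correspondence Z = [vec H; vec L][vec H; vec L]^T between witnesses *)
  (forall (Q : 'I_N -> 'M[R]_(tn n)) (Z : 'M[R]_(n * (n + m))),
     (forall k, pdmx (Q k)) -> psdmx Z -> \rank Z = 1%N ->
     (forall k, psdmx (Slmi n m (M k) (Q k) Z bt)) ->
     exists (H : 'M[R]_n) (L : 'M[R]_(m, n)), Z = Zof n m H L /\
       (forall k, psdmx (Sqmi n m (M k) (Q k) H L bt))) /\
  (forall (Q : 'I_N -> 'M[R]_(tn n)) (H : 'M[R]_n) (L : 'M[R]_(m, n)),
     (forall k, pdmx (Q k)) ->
     (forall k, psdmx (Sqmi n m (M k) (Q k) H L bt)) ->
     psdmx (Zof n m H L) /\ \rank (Zof n m H L) = 1%N /\
     (forall k, psdmx (Slmi n m (M k) (Q k) (Zof n m H L) bt))) /\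
  (forall (Q : 'I_N -> 'M[R]_(tn n)) (Z : 'M[R]_(n * (n + m))),
     (forall k, pdmx (Q k)) -> psdmx Z -> \rank Z = 1%N ->
     (forall k, pdmx (Slmi n m (M k) (Q k) Z 1)) ->
     exists (H : 'M[R]_n) (L : 'M[R]_(m, n)), Z = Zof n m H L /\
       (forall k, pdmx (Sqmi n m (M k) (Q k) H L 1))) /\
  (forall (Q : 'I_N -> 'M[R]_(tn n)) (H : 'M[R]_n) (L : 'M[R]_(m, n)),
     (forall k, pdmx (Q k)) ->
     (forall k, pdmx (Sqmi n m (M k) (Q k) H L 1)) ->
     psdmx (Zof n m H L) /\ \rank (Zof n m H L) = 1%N /\
     (forall k, pdmx (Slmi n m (M k) (Q k) (Zof n m H L) 1))).
Proof.
move=> hn hm hN _ _.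
have hpsd : forall X : 'M[R]_(tn n + tn n), psdmx X -> psdmx X by [].
have hpd : forall X : 'M[R]_(tn n + tn n), pdmx X -> psdmx X by move=> X; exact: pd_psd.
have F1 := @fwdL R n m N M bt hn hm (@psdmx R _).
have B1 := @bwdL R n m N M bt hn hm hN _ hpsd.
have F2 := @fwdL R n m N M 1 hn hm (@pdmx R _).
have B2 := @bwdL R n m N M 1 hn hm hN _ hpd.
split.
  split.
    move=> [Q [Z [hQ [hZ [hr hS]]]]].
    have [H [L [_ hS']]] := F1 Q Z hZ hr hS.
    by exists Q, H, L.
  move=> [Q [H [L [hQ hS]]]].
  have [hZ [hr hS']] := B1 Q H L hQ hS.
  by exists Q, (Zof n m H L).
split.
  split.
    move=> [Q [Z [hQ [hZ [hr hS]]]]].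
    have [H [L [_ hS']]] := F2 Q Z hZ hr hS.
    by exists Q, H, L.
  move=> [Q [H [L [hQ hS]]]].
  have [hZ [hr hS']] := B2 Q H L hQ hS.
  by exists Q, (Zof n m H L).
split; first by move=> Q Z _; exact: F1.
split; first exact: B1.
split; first by move=> Q Z _; exact: F2.
exact: B2.
Qed.
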